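(* Consider a ROS~2 application executed on a single processor by the events executor with the two-queue mechanism described in the context, under the standing assumptions of the context, with ties in priority broken in LIFO order of release eligibility. Any element removed from the LIFO child queue is always a highest-priority element of that queue.
   Context: Model: a ROS~2 application is abstracted as a forest of trees of subtasks. Roots are released periodically/sporadically with known integer job priorities; a child subtask is released immediately when its parent completes (and only then), and inherits its parent's priority (fixed job-level priority). Execution is non-preemptive on a single processor; larger priority values mean higher priority. Executor mechanism: a released root subtask is pushed into a priority queue (root_queue); a released child subtask is assigned the value latest_priority and pushed onto a LIFO queue (child_queue); at each scheduling decision the tops of the two queues are compared, the one of greater priority is popped and executed, and latest_priority is set to its priority. *)

(* Defs.v *)
(* Abstract model of the ROS 2 events executor with the
   two-queue (root priority queue / child LIFO queue) mechanism. *)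
From mathcomp Require Import all_boot all_order all_algebra.
Set Implicit Arguments. Unset Strict Implicit. Unset Printing Implicit Defensive.
Import Order.TTheory GRing.Theory Num.Theory.
Local Open Scope ring_scope.

Section Executor.
Variable T : eqType.               (* subtasks of the application *)
Variable is_root : pred T.
Variable children : T -> seq T.

(* The release stamp records the order of release eligibility (larger =
   released later); it is only used to break ties in LIFO order. *)
Definition job := (T * int * nat)%type.
Definition jtask (j : job) : T := j.1.1.
Definition jprio (j : job) : int := j.1.2.
Definition jstamp (j : job) : nat := j.2.

Definition higher (a b : job) : bool :=
  (jprio b < jprio a) || ((jprio a == jprio b) && (jstamp b < jstamp a)%N).

Record state := State {
  rootq : seq job;        (* root_queue (priority queue, as a multiset) *)
  childq : seq job;       (* child_queue, LIFO; head = top of the stack *)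
  latest : int;
  running : option job;   (* job executing non-preemptively, if any *)
  clock : nat             (* next release stamp *)
}.

Fixpoint push_children (l : seq T) (p : int) (q : seq job) (k : nat)
  : seq job * nat :=
  match l with
  | [::] => (q, k)
  | c :: l' => push_children l' p ((c, p, k) :: q) k.+1
  end.

Definition is_top_root (s : state) (r : job) : Prop :=
  r \in rootq s /\ forall x, x \in rootq s -> x != r -> higher r x.

Inductive event := ERelease | EComplete | EPickRoot of job | EPickChild of job.

Inductive step : state -> event -> state -> Prop :=
  | step_release s r p :
      is_root r ->
      step s ERelease
        (State ((r, p, clock s) :: rootq s) (childq s) (latest s)
               (running s) (clock s).+1)
  | step_complete s j :
      running s = Some j ->
      let qk := push_children (children (jtask j)) (latest s) (childq s) (clock s) in
      step s EComplete (State (rootq s) qk.1 (latest s) None qk.2)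
  | step_pick_root s r :
      running s = None ->
      is_top_root s r ->
      (forall c rest, childq s = c :: rest -> higher r c) ->
      step s (EPickRoot r)
        (State (rem r (rootq s)) (childq s) (jprio r) (Some r) (clock s))
  | step_pick_child s c rest :
      running s = None ->
      childq s = c :: rest ->
      (forall r, is_top_root s r -> higher c r) ->
      step s (EPickChild c)
        (State (rootq s) rest (jprio c) (Some c) (clock s)).

Definition init_state (l0 : int) : state := State [::] [::] l0 None 0.

Inductive reachable (l0 : int) : state -> Prop :=
  | reach_init : reachable l0 (init_state l0)
  | reach_step s e s' : reachable l0 s -> step s e s' -> reachable l0 s'.

End Executor.

(* Main.v *)
Require Import Defs.
From mathcomp Require Import all_boot all_order all_algebra.
Import Order.TTheory GRing.Theory Num.Theory.
Local Open Scope ring_scope.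
Set Implicit Arguments. Unset Strict Implicit.

Section Aux.
Variable T : eqType.

Definition geP (a b : job T) : bool := jprio b <= jprio a.

Definition inv (s : state T) : Prop :=
  sorted geP (childq s) /\ all (fun x => jprio x <= latest s) (childq s).

Lemma higher_le (a b : job T) : higher a b -> jprio b <= jprio a.
Proof.
rewrite /higher => /orP [/ltW //|/andP [/eqP -> _] //].
Qed.

Lemma geP_trans : transitive geP.
Proof. move=> a b c; rewrite /geP => h1 h2; exact: le_trans h2 h1. Qed.

Lemma push_inv (l : seq T) p q k :
  sorted geP q -> all (fun x => jprio x <= p) q ->
  sorted geP (push_children l p q k).1 /\
  all (fun x => jprio x <= p) (push_children l p q k).1.
Proof.
elim: l q k => [|c l IH] q k /= Hs Ha //.
apply: IH => /=.
- case: q Hs Ha => [|y q] //= Hs /andP [Hy _].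
  by rewrite Hs andbT /geP.
- by rewrite Ha andbT /jprio /=.
Qed.
End Aux.

Lemma reach_inv (T : eqType) (is_root : pred T) (children : T -> seq T)
    (l0 : int) (s : state T) :
  reachable is_root children l0 s -> inv s.
Proof.
elim => [|{}s e s' _ [Hs Ha] Hst]; first by [].
case: Hst Hs Ha => /=.
- by move=> {}s r p _ Hs Ha; split.
- move=> {}s j _ Hs Ha; rewrite /inv /=; exact: push_inv.
- move=> {}s r _ _ Hc Hs Ha; rewrite /inv /=; split => //.
  case E: (childq s) Hs Ha Hc => [|c rest] //= Hs Ha Hc.
  have Hrc := higher_le (Hc c rest erefl).
  rewrite Hrc /=.
  apply/allP => x Hx.
  have := order_path_min (@geP_trans T) Hs.
  move/allP/(_ x Hx); rewrite /geP => H; exact: le_trans H Hrc.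
- move=> {}s c rest _ E _ Hs Ha; rewrite /inv /=; rewrite E /= in Hs Ha.
  split; first exact: path_sorted Hs.
  apply/allP => x Hx.
  by have := order_path_min (@geP_trans T) Hs => /allP/(_ x Hx).
Qed.

Theorem lemma5 (T : eqType) (is_root : pred T) (children : T -> seq T)
    (l0 : int) (s s' : state T) (c : job T) :
  reachable is_root children l0 s ->
  step is_root children s (EPickChild c) s' ->
  forall x, x \in childq s -> jprio x <= jprio c.
Proof.
move=> /reach_inv [Hs _] Hst.
inversion Hst as [| | |s0 c0 rest _ E _]; subst.
move=> x; rewrite E inE => /orP [/eqP -> //|Hx].
rewrite E /= in Hs.
by have := order_path_min (@geP_trans T) Hs => /allP/(_ x Hx).
Qed.
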